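(* Every minimal lower frame sequence in a separable Hilbert space $\mathcal{H}$ is a complete Riesz-Fischer sequence in $\mathcal{H}$.
   Context: For a sequence $\Psi=\{\psi_i\}_{i\in I}$ ($I$ countable): $\Psi$ is a lower frame sequence if there is $A>0$ with $A\|f\|^2\le\sum_i|\langle f,\psi_i\rangle|^2$ for all $f\in\mathcal{H}$ with $\{\langle f,\psi_i\rangle\}\in\ell^2$; minimal if $\psi_j\notin\overline{\mathrm{span}}\{\psi_i\}_{i\ne j}$ for all $j$; complete if $\overline{\mathrm{span}}\{\psi_i\}=\mathcal{H}$; a Riesz-Fischer sequence if there is $A'>0$ with $A'\|c\|^2\le\|\sum_ic_i\psi_i\|^2$ for all finitely supported scalar sequences $c$. *)

(* Defs.v *)
From Stdlib Require Import Reals List.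
From Coquelicot Require Import Coquelicot.
Open Scope R_scope.

(* An inner product on a complex normed module H, linear in the first
   argument, conjugate-symmetric, and inducing the norm of H:
   <x,x> = ||x||^2.  (Positivity/definiteness follow from the norm axioms.) *)
Record InnerProduct (H : NormedModule C_AbsRing) := {
  ip :> H -> H -> C;
  ip_addl : forall x y z, ip (plus x y) z = Cplus (ip x z) (ip y z);
  ip_scall : forall (a : C) x z, ip (scal a x) z = Cmult a (ip x z);
  ip_conj : forall x y, ip y x = Cconj (ip x y);
  ip_norm : forall x, ip x x = RtoC (norm x ^ 2)
}.

Record HilbertSpace := {
  hs_carrier :> CompleteNormedModule C_AbsRing;
  hs_ip : InnerProduct hs_carrier
}.

Definition inner (H : HilbertSpace) (x y : H) : C := hs_ip H x y.

Definition separable (H : HilbertSpace) : Prop :=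
  exists d : nat -> H, forall (x : H) (eps : R), 0 < eps ->
    exists n, norm (minus x (d n)) < eps.

Definition countable_type (I : Type) : Prop :=
  exists e : I -> nat, forall i j, e i = e j -> i = j.

Definition lsumR {I : Type} (l : list I) (a : I -> R) : R :=
  fold_right (fun i s => a i + s) 0 l.
Definition lsumH {I : Type} {H : HilbertSpace} (l : list I) (v : I -> H) : H :=
  fold_right (fun i s => plus (v i) s) zero l.

(* sum_{i in I} a_i for a_i >= 0, as the supremum (in Rbar) of all finite
   partial sums over finite subsets of I (lists without duplicates). *)
Definition sumI {I : Type} (a : I -> R) : Rbar :=
  Lub_Rbar (fun s => exists l : list I, NoDup l /\ s = lsumR l a).

Definition coeffs_in_l2 {I : Type} {H : HilbertSpace} (psi : I -> H) (f : H) : Prop :=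
  is_finite (sumI (fun i => Cmod (inner H f (psi i)) ^ 2)).

Definition lower_frame_sequence {I : Type} {H : HilbertSpace} (psi : I -> H) : Prop :=
  exists A : R, 0 < A /\ forall f : H, coeffs_in_l2 psi f ->
    Rbar_le (Finite (A * norm f ^ 2)) (sumI (fun i => Cmod (inner H f (psi i)) ^ 2)).

Definition in_span {I : Type} {H : HilbertSpace} (P : I -> Prop) (psi : I -> H) (v : H) : Prop :=
  exists (l : list I) (c : I -> C), List.Forall P l /\ v = lsumH l (fun i => scal (c i) (psi i)).

Definition in_closed_span {I : Type} {H : HilbertSpace} (P : I -> Prop) (psi : I -> H) (v : H) : Prop :=
  forall eps : R, 0 < eps -> exists w, in_span P psi w /\ norm (minus v w) < eps.

Definition minimal_seq {I : Type} {H : HilbertSpace} (psi : I -> H) : Prop :=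
  forall j : I, ~ in_closed_span (fun i => i <> j) psi (psi j).

Definition complete_seq {I : Type} {H : HilbertSpace} (psi : I -> H) : Prop :=
  forall f : H, in_closed_span (fun _ => True) psi f.

(* Riesz-Fischer: A' ||c||^2 <= ||sum c_i psi_i||^2 for finitely supported c
   (support contained in a finite duplicate-free list l). *)
Definition riesz_fischer {I : Type} {H : HilbertSpace} (psi : I -> H) : Prop :=
  exists A' : R, 0 < A' /\ forall (l : list I) (c : I -> C), NoDup l ->
    A' * lsumR l (fun i => Cmod (c i) ^ 2)
      <= norm (lsumH l (fun i => scal (c i) (psi i))) ^ 2.

(* Main.v *)
Require Import Defs.
From Stdlib Require Import Reals List.
From Coquelicot Require Import Coquelicot.
From Stdlib Require Import Lra Psatz Classical ClassicalEpsilon.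
Open Scope R_scope.

Lemma C_ext (a b : C) : fst a = fst b -> snd a = snd b -> a = b.
Proof. destruct a, b; simpl; intros; subst; reflexivity. Qed.

Lemma ipD_l (H : HilbertSpace) (x y z : H) :
  inner H (plus x y) z = Cplus (inner H x z) (inner H y z).
Proof. apply ip_addl. Qed.
Lemma ipS_l (H : HilbertSpace) (a : C) (x z : H) :
  inner H (scal a x) z = Cmult a (inner H x z).
Proof. apply ip_scall. Qed.
Lemma ipC (H : HilbertSpace) (x y : H) : inner H y x = Cconj (inner H x y).
Proof. apply ip_conj. Qed.
Lemma ipN (H : HilbertSpace) (x : H) : inner H x x = RtoC (norm x ^ 2).
Proof. apply ip_norm. Qed.

Lemma ipD_r (H : HilbertSpace) (x y z : H) :
  inner H z (plus x y) = Cplus (inner H z x) (inner H z y).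
Proof.
  rewrite ipC, ipD_l, (ipC H z x), (ipC H z y).
  destruct (inner H z x), (inner H z y); apply C_ext; simpl; lra.
Qed.
Lemma ipS_r (H : HilbertSpace) (a : C) (x z : H) :
  inner H z (scal a x) = Cmult (Cconj a) (inner H z x).
Proof.
  rewrite ipC, ipS_l, (ipC H z x).
  destruct a, (inner H z x); apply C_ext; simpl; lra.
Qed.
Lemma ip0_l (H : HilbertSpace) (z : H) : inner H zero z = RtoC 0.
Proof.
  assert (E := ipD_l H zero zero z). rewrite plus_zero_r in E.
  destruct (inner H zero z) as [a b]; simpl in E. injection E; intros.
  apply C_ext; simpl; lra.
Qed.
Lemma ip0_r (H : HilbertSpace) (z : H) : inner H z zero = RtoC 0.
Proof. rewrite ipC, ip0_l. apply C_ext; simpl; lra. Qed.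
Lemma ipO_l (H : HilbertSpace) (x z : H) : inner H (opp x) z = Copp (inner H x z).
Proof.
  replace (opp x) with (scal (opp one) x) by (exact (scal_opp_one x)). rewrite ipS_l. destruct (inner H x z); apply C_ext; simpl; lra.
Qed.
Lemma ipO_r (H : HilbertSpace) (x z : H) : inner H z (opp x) = Copp (inner H z x).
Proof.
  rewrite ipC, ipO_l, (ipC H z x). destruct (inner H x z); apply C_ext; simpl; lra.
Qed.
Lemma ipM_l (H : HilbertSpace) (x y z : H) :
  inner H (minus x y) z = Cminus (inner H x z) (inner H y z).
Proof. unfold minus. rewrite ipD_l, ipO_l. reflexivity. Qed.
Lemma ipM_r (H : HilbertSpace) (x y z : H) :
  inner H z (minus x y) = Cminus (inner H z x) (inner H z y).
Proof. unfold minus. rewrite ipD_r, ipO_r. reflexivity. Qed.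

Lemma nsq_re (H : HilbertSpace) (x : H) : norm x ^ 2 = fst (inner H x x).
Proof. rewrite ipN. reflexivity. Qed.
Lemma ip_diag_im (H : HilbertSpace) (x : H) : snd (inner H x x) = 0.
Proof. rewrite ipN. reflexivity. Qed.

Lemma nsq_minus_scal (H : HilbertSpace) (x y : H) (t : C) :
  norm (minus x (scal t y)) ^ 2 =
  norm x ^ 2 - 2 * fst (Cmult (Cconj t) (inner H x y))
  + (fst t ^ 2 + snd t ^ 2) * norm y ^ 2.
Proof.
  rewrite !nsq_re, ipM_l, !ipM_r, !ipS_l, !ipS_r.
  rewrite (ipC H y x).
  pose proof (ip_diag_im H y).
  destruct t as [t1 t2], (inner H x y) as [a b], (inner H y y) as [c d], (inner H x x) as [e f].
  simpl in *. subst. ring.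
Qed.


Notation Hplus := (@plus (CompleteNormedModule.AbelianMonoid C_AbsRing (hs_carrier _))).
Notation Hopp := (@opp (CompleteNormedModule.AbelianGroup C_AbsRing (hs_carrier _))).
Notation Hscal := (@scal C_Ring (CompleteNormedModule.ModuleSpace C_AbsRing (hs_carrier _))).
Notation Hzero := (@zero (CompleteNormedModule.AbelianMonoid C_AbsRing (hs_carrier _))).
Lemma Hpa (H : HilbertSpace) (x y z : H) : Hplus x (Hplus y z) = Hplus (Hplus x y) z.
Proof. exact (plus_assoc x y z). Qed.
Lemma Hpc (H : HilbertSpace) (x y : H) : Hplus x y = Hplus y x.
Proof. exact (plus_comm x y). Qed.
Lemma Hp0r (H : HilbertSpace) (x : H) : Hplus x Hzero = x.
Proof. exact (plus_zero_r x). Qed.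
Lemma Hp0l (H : HilbertSpace) (x : H) : Hplus Hzero x = x.
Proof. exact (plus_zero_l x). Qed.
Lemma Hpor (H : HilbertSpace) (x : H) : Hplus x (Hopp x) = Hzero.
Proof. exact (plus_opp_r x). Qed.
Lemma Hpol (H : HilbertSpace) (x : H) : Hplus (Hopp x) x = Hzero.
Proof. exact (plus_opp_l x). Qed.
Lemma Hop (H : HilbertSpace) (x y : H) : Hopp (Hplus x y) = Hplus (Hopp x) (Hopp y).
Proof. exact (opp_plus x y). Qed.
Lemma Hoo (H : HilbertSpace) (x : H) : Hopp (Hopp x) = x.
Proof. exact (opp_opp x). Qed.
Lemma Hsdl (H : HilbertSpace) (t : C) (x y : H) : Hscal t (Hplus x y) = Hplus (Hscal t x) (Hscal t y).
Proof. exact (scal_distr_l t x y). Qed.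
Lemma Hsdr (H : HilbertSpace) (t s : C) (x : H) : Hscal (Cplus t s) x = Hplus (Hscal t x) (Hscal s x).
Proof. exact (scal_distr_r t s x). Qed.
Lemma Hsor (H : HilbertSpace) (t : C) (x : H) : Hscal t (Hopp x) = Hopp (Hscal t x).
Proof. exact (scal_opp_r t x). Qed.
Lemma Hs1 (H : HilbertSpace) (x : H) : Hscal (RtoC 1) x = x.
Proof. exact (scal_one x). Qed.
Lemma Hs0 (H : HilbertSpace) (t : C) : Hscal t (@zero (CompleteNormedModule.AbelianMonoid C_AbsRing (hs_carrier H))) = zero.
Proof. exact (scal_zero_r t). Qed.
Lemma Hsa (H : HilbertSpace) (t s : C) (x : H) : Hscal t (Hscal s x) = Hscal (Cmult t s) x.
Proof. exact (scal_assoc t s x). Qed.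
Lemma Hno (H : HilbertSpace) (x : H) : norm (Hopp x) = norm x.
Proof. exact (norm_opp x). Qed.
Lemma Hnt (H : HilbertSpace) (x y : H) : norm (Hplus x y) <= norm x + norm y.
Proof. exact (norm_triangle x y). Qed.
Lemma Hns (H : HilbertSpace) (t : C) (x : H) : norm (Hscal t x) <= Cmod t * norm x.
Proof. exact (norm_scal t x). Qed.
Lemma Hn0 (H : HilbertSpace) (x : H) : norm x = 0 -> x = Hzero.
Proof. exact (norm_eq_zero x). Qed.
Lemma Hnz (H : HilbertSpace) : norm (@zero (CompleteNormedModule.AbelianMonoid C_AbsRing (hs_carrier H))) = 0.
Proof. exact norm_zero. Qed.
Lemma Hng (H : HilbertSpace) (x : H) : 0 <= norm x.
Proof. exact (norm_ge_0 x). Qed.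

Lemma Hm (H : HilbertSpace) (x y : H) : minus x y = Hplus x (Hopp y).
Proof. reflexivity. Qed.

Lemma mA1 (H : HilbertSpace) (v a b : H) :
  Hplus (minus v a) (minus v b) = minus (Hplus v v) (Hplus a b).
Proof.
  rewrite !Hm. rewrite Hop.
  rewrite <- !Hpa. f_equal. rewrite !Hpa. f_equal. apply Hpc.
Qed.
Lemma mA2 (H : HilbertSpace) (v a b : H) :
  minus (minus v a) (minus v b) = minus b a.
Proof.
  rewrite !Hm. rewrite Hop, Hoo.
  rewrite <- (Hpa _ v), (Hpa _ (opp a)), (Hpc _ (opp a) (opp v)), <- (Hpa _ (opp v)), (Hpa _ v), Hpor, Hp0l, Hpc. reflexivity.
Qed.
Lemma mA3 (H : HilbertSpace) (x : H) :
  Hplus (Hscal (RtoC (/2)) x) (Hscal (RtoC (/2)) x) = x.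
Proof.
  rewrite <- Hsdr.
  replace (Cplus (RtoC (/2)) (RtoC (/2))) with (RtoC 1).
  - apply Hs1.
  - apply C_ext; simpl; lra.
Qed.
Lemma mA4 (H : HilbertSpace) (v m u : H) (t : C) :
  minus (minus v m) (Hscal t u) = minus v (Hplus m (Hscal t u)).
Proof. rewrite !Hm. rewrite Hop, Hpa. reflexivity. Qed.
Lemma mA5 (H : HilbertSpace) (m u w1 w2 : H) (t : C) :
  minus (Hplus m (Hscal t u)) (Hplus w1 (Hscal t w2)) = Hplus (minus m w1) (Hscal t (minus u w2)).
Proof.
  rewrite !Hm. rewrite Hop.
  replace (scal t (plus u (opp w2))) with (plus (scal t u) (scal t (opp w2))) by (symmetry; exact (scal_distr_l t u (opp w2))).
  replace (scal t (opp w2)) with (opp (scal t w2)) by (symmetry; exact (scal_opp_r t w2)).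
  rewrite <- !Hpa. f_equal. rewrite !Hpa. f_equal. apply Hpc.
Qed.
Lemma mA6 (H : HilbertSpace) (x y z : H) :
  minus x z = Hplus (minus x y) (minus y z).
Proof.
  rewrite !Hm. rewrite <- Hpa, (Hpa _ (opp y)), Hpol, Hp0l. reflexivity.
Qed.
Lemma mA7 (H : HilbertSpace) (x y : H) : norm (minus x y) = norm (minus y x).
Proof.
  rewrite <- Hno. rewrite !Hm. rewrite Hop, Hoo, Hpc. reflexivity.
Qed.
Lemma mA8 (H : HilbertSpace) (x y : H) : Hplus (minus x y) y = x.
Proof. rewrite !Hm. rewrite <- Hpa, Hpol, Hp0r. reflexivity. Qed.


Lemma paral (H : HilbertSpace) (a b : H) :
  norm (plus a b) ^ 2 + norm (minus a b) ^ 2 = 2 * norm a ^ 2 + 2 * norm b ^ 2.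
Proof.
  rewrite !nsq_re, ipD_l, !ipD_r, ipM_l, !ipM_r, (ipC H a b).
  destruct (inner H a b), (inner H a a), (inner H b b). simpl. ring.
Qed.
Lemma nsq_plus_self (H : HilbertSpace) (g : H) : norm (plus g g) ^ 2 = 4 * norm g ^ 2.
Proof.
  rewrite !nsq_re, ipD_l, !ipD_r. destruct (inner H g g). simpl. ring.
Qed.

Definition clos (H : HilbertSpace) (S : H -> Prop) (x : H) : Prop :=
  forall eps, 0 < eps -> exists w, S w /\ norm (minus x w) < eps.
Definition subsp (H : HilbertSpace) (S : H -> Prop) : Prop :=
  S zero /\ (forall x y, S x -> S y -> S (plus x y)) /\ (forall (a : C) x, S x -> S (scal a x)).

Lemma arch (K eps : R) : 0 <= K -> 0 < eps ->
  exists N, forall n, (N <= n)%nat -> K / (INR n + 1) < eps.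
Proof.
  intros HK He. destruct (INR_archimed eps K He) as [N HN]. exists N. intros n Hn.
  apply le_INR in Hn. pose proof (pos_INR N).
  apply Rmult_lt_reg_r with (INR n + 1). lra.
  unfold Rdiv. rewrite Rmult_assoc, Rinv_l by lra. nra.
Qed.

Lemma inf_exists (H : HilbertSpace) (S : H -> Prop) (v : H) : S zero ->
  exists d, 0 <= d /\ (forall w, S w -> d <= norm (minus v w)) /\
    (forall e, 0 < e -> exists w, S w /\ norm (minus v w) < d + e).
Proof.
  intros S0.
  set (E := fun r => exists w, S w /\ r = - norm (minus v w)).
  assert (bE : bound E).
  { exists 0. intros r [w [_ ->]]. pose proof (Hng H (minus v w)). lra. }
  assert (nE : exists r, E r) by (exists (- norm (minus v zero)); exists zero; auto).
  destruct (completeness E bE nE) as [m [mub mlub]].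
  exists (- m). split; [|split].
  - assert (m <= 0). { apply mlub. intros r [w [_ ->]]. pose proof (Hng H (minus v w)). lra. } lra.
  - intros w Sw. assert (- norm (minus v w) <= m) by (apply mub; exists w; auto). lra.
  - intros e He. destruct (classic (exists w, S w /\ norm (minus v w) < - m + e)) as [?|Hn]; auto.
    exfalso. assert (m <= m - e); [|lra].
    apply mlub. intros r [w [Sw ->]].
    destruct (Rlt_or_le (norm (minus v w)) (- m + e)) as [Hl|Hl].
    + exfalso. apply Hn. exists w. auto.
    + lra.
Qed.

Lemma clos_sub (H : HilbertSpace) (S : H -> Prop) (x : H) : S x -> clos H S x.
Proof.
  intros Sx eps He. exists x. split; auto. rewrite Hm, Hpor, Hnz. exact He.
Qed.

Lemma clos_lin (H : HilbertSpace) (S : H -> Prop) (m u : H) (t : C) :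
  subsp H S -> clos H S m -> clos H S u -> clos H S (plus m (scal t u)).
Proof.
  intros [S0 [Sp Ss]] Cm Cu eps He.
  destruct (Cm (eps / 2)) as [w1 [S1 N1]]. lra.
  pose proof (Cmod_ge_0 t).
  destruct (Cu (eps / 2 / (Cmod t + 1))) as [w2 [S2 N2]].
  { apply Rdiv_lt_0_compat; lra. }
  exists (plus w1 (scal t w2)). split. { apply Sp; auto. }
  rewrite mA5.
  eapply Rle_lt_trans. apply Hnt.
  eapply Rle_lt_trans. apply Rplus_le_compat_l. apply Hns.
  assert (Cmod t * norm (minus u w2) <= Cmod t * (eps / 2 / (Cmod t + 1))).
  { apply Rmult_le_compat_l; lra. }
  assert (Cmod t * (eps / 2 / (Cmod t + 1)) < eps / 2).
  { unfold Rdiv. rewrite <- Rmult_assoc, (Rmult_comm (Cmod t)), Rmult_assoc.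
    assert (Cmod t * / (Cmod t + 1) < 1).
    { apply Rmult_lt_reg_r with (Cmod t + 1). lra. rewrite Rmult_assoc, Rinv_l by lra. lra. }
    nra. }
  lra.
Qed.

Lemma clos_le (H : HilbertSpace) (S : H -> Prop) (v z : H) (d : R) :
  (forall w, S w -> d <= norm (minus v w)) -> clos H S z -> d <= norm (minus v z).
Proof.
  intros Hd Cz. destruct (Rlt_or_le (norm (minus v z)) d) as [Hl|Hl]; auto.
  destruct (Cz (d - norm (minus v z))) as [w [Sw Nw]]. lra.
  pose proof (Hd w Sw). rewrite (mA6 H v z w) in H0. pose proof (Hnt H (minus v z) (minus z w)). lra.
Qed.

Lemma Hc1 (H : HilbertSpace) (x y : H) (eps : R) : norm (minus y x) < eps -> ball x eps y.
Proof. exact (norm_compat1 x y eps). Qed.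
Lemma Hc2 (H : HilbertSpace) (x y : H) (eps : posreal) :
  ball x eps y -> norm (minus y x) < @norm_factor C_AbsRing H * eps.
Proof. exact (norm_compat2 x y eps). Qed.


Lemma proj (H : HilbertSpace) (S : H -> Prop) (v : H) :
  subsp H S -> exists m, clos H S m /\ forall u, clos H S u -> inner H (minus v m) u = RtoC 0.
Proof.
  intros SS. pose proof SS as [S0 [Sp Ss]].
  destruct (inf_exists H S v S0) as [d [d0 [dlow dapp]]].
  assert (Hw : forall n : nat, exists w, S w /\ norm (minus v w) < d + / (INR n + 1)).
  { intro n. apply dapp. apply Rinv_0_lt_compat. pose proof (pos_INR n). lra. }
  set (w := fun n => proj1_sig (constructive_indefinite_description _ (Hw n))).
  assert (wS : forall n, S (w n)).
  { intro n. exact (proj1 (proj2_sig (constructive_indefinite_description _ (Hw n)))). }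
  assert (wd : forall n, norm (minus v (w n)) < d + / (INR n + 1)).
  { intro n. exact (proj2 (proj2_sig (constructive_indefinite_description _ (Hw n)))). }
  clearbody w.
  set (e := fun n : nat => (2*d+1) / (INR n + 1)).
  assert (wsq : forall n, norm (minus v (w n)) ^ 2 <= d ^ 2 + e n).
  { intro n. pose proof (wd n). pose proof (Hng _ (minus v (w n))). unfold e.
    pose proof (pos_INR n).
    assert (0 < / (INR n + 1) <= 1).
    { split. apply Rinv_0_lt_compat; lra. rewrite <- Rinv_1. apply Rinv_le_contravar; lra. }
    set (q := / (INR n + 1)) in *. unfold Rdiv. fold q. nra. }
  assert (cau : forall n k, norm (minus (w k) (w n)) ^ 2 <= 2 * e n + 2 * e k).
  { intros n k.
    assert (Smid : S (scal (RtoC (/2)) (plus (w n) (w k)))) by (apply Ss, Sp; auto).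
    pose proof (dlow _ Smid) as Hmid.
    pose proof (paral H (minus v (w n)) (minus v (w k))) as Hp.
    rewrite mA2 in Hp.
    assert (Hplus (minus v (w n)) (minus v (w k)) =
            Hplus (minus v (scal (RtoC (/2)) (plus (w n) (w k))))
                 (minus v (scal (RtoC (/2)) (plus (w n) (w k))))) as Eq.
    { rewrite !mA1, mA3. reflexivity. }
    rewrite Eq, nsq_plus_self in Hp.
    pose proof (wsq n). pose proof (wsq k).
    assert (d ^ 2 <= norm (minus v (scal (RtoC (/2)) (plus (w n) (w k)))) ^ 2).
    { apply pow_incr. lra. }
    lra. }
  assert (emono : forall n k, (n <= k)%nat -> e k <= e n).
  { intros n k Hnk. unfold e, Rdiv. apply Rmult_le_compat_l. lra.
    apply le_INR in Hnk. pose proof (pos_INR n). apply Rinv_le_contravar; lra. }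
  set (F := filtermap w eventually).
  assert (PF : ProperFilter F) by (apply filtermap_proper_filter, eventually_filter).
  assert (CF : cauchy F).
  { intro eps. destruct (arch (4 * (2 * d + 1)) (eps ^ 2)) as [N HN].
    lra. pose proof (cond_pos eps). nra.
    exists (w N). unfold F, filtermap. exists N. intros k Hk. apply Hc1.
    pose proof (cau N k). pose proof (emono N k Hk). pose proof (HN N (le_n N)).
    assert (e N = (2 * d + 1) / (INR N + 1)) by reflexivity.
    assert (4 * (2 * d + 1) / (INR N + 1) = 4 * e N) by (rewrite H3; unfold Rdiv; ring).
    pose proof (Hng _ (minus (w k) (w N))). pose proof (cond_pos eps).
    nra. }
  set (m := lim F).
  assert (conv : forall delta, 0 < delta -> exists k0, forall k, (k0 <= k)%nat -> norm (minus (w k) m) < delta).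
  { intros delta Hd. pose proof (@norm_factor_gt_0 C_AbsRing H) as Hnf.
    assert (Hp : 0 < delta / @norm_factor C_AbsRing H) by (apply Rdiv_lt_0_compat; auto).
    destruct (complete_cauchy F PF CF (mkposreal _ Hp)) as [k0 Hk0].
    exists k0. intros k Hk. specialize (Hk0 k Hk). apply Hc2 in Hk0.
    simpl in Hk0. replace delta with (@norm_factor C_AbsRing H * (delta / @norm_factor C_AbsRing H)). exact Hk0.
    field. lra. }
  exists m. split.
  - intros eps He. destruct (conv eps He) as [k0 Hk0]. exists (w k0). split; auto.
    rewrite mA7. apply Hk0. lia.
  - assert (vm : norm (minus v m) <= d).
    { destruct (Rle_or_lt (norm (minus v m)) d) as [?|Hl]; auto. exfalso.
      set (g := norm (minus v m) - d).
      destruct (conv (g / 2)) as [k0 Hk0]. unfold g; lra.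
      destruct (arch 1 (g / 2)) as [N1 HN1]. lra. unfold g; lra.
      set (k := Nat.max k0 N1).
      specialize (Hk0 k (Nat.le_max_l _ _)). specialize (HN1 k (Nat.le_max_r _ _)).
      pose proof (wd k).
      pose proof (Hnt H (minus v (w k)) (minus (w k) m)) as T. rewrite <- (mA6 H v (w k) m) in T.
      unfold Rdiv in HN1. rewrite Rmult_1_l in HN1. unfold g in *. lra. }
    intros u Cu.
    assert (key : forall t : C, norm (minus v m) ^ 2 <= norm (minus (minus v m) (scal t u)) ^ 2).
    { intro t. rewrite mA4. apply pow_incr. split. apply Hng.
      eapply Rle_trans. exact vm. apply (clos_le H S). exact dlow.
      apply clos_lin; auto. intros eps He. destruct (conv eps He) as [k0 Hk0].
      exists (w k0). split; auto. rewrite mA7. apply Hk0. lia. }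
    destruct (inner H (minus v m) u) as [a b] eqn:Ez.
    set (N := norm u ^ 2).
    assert (N0 : 0 <= N) by (unfold N; pose proof (Hng H u); nra).
    set (s := / (N + 1)).
    assert (s0 : 0 < s) by (apply Rinv_0_lt_compat; lra).
    assert (sN : s * N < 1).
    { unfold s. apply Rmult_lt_reg_l with (N + 1). lra.
      rewrite <- Rmult_assoc, Rinv_r by lra. lra. }
    specialize (key (RtoC s * (a, b))%C).
    rewrite nsq_minus_scal, Ez in key. fold N in key. simpl in key.
    assert (0 <= (a*a + b*b) * (s * N - 2) * s) by nra.
    assert (X0 : 0 <= a*a+b*b) by nra.
    assert (X1 : 0 <= (a*a+b*b)*(s*N-2)).
    { destruct (Rle_or_lt 0 ((a*a+b*b)*(s*N-2))) as [?|Hl]; auto. exfalso.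
      assert (((a*a+b*b)*(s*N-2)) * s < 0) by nra. lra. }
    assert (a * a + b * b <= 0).
    { destruct (Rle_or_lt (a*a+b*b) 0) as [?|Hl]; auto. exfalso.
      assert ((a*a+b*b)*(s*N-2) < 0) by nra. lra. }
    assert (a = 0) by nra. assert (b = 0) by nra. subst.
    apply C_ext; reflexivity.
Qed.


Definition lsumP {I : Type} {H : HilbertSpace} (L : list (I * C)) (psi : I -> H) : H :=
  fold_right (fun p s => Hplus (Hscal (snd p) (psi (fst p))) s) zero L.
Definition spanP {I : Type} {H : HilbertSpace} (P : I -> Prop) (psi : I -> H) (v : H) : Prop :=
  exists L : list (I * C), List.Forall (fun p => P (fst p)) L /\ v = lsumP L psi.

Lemma lsumP_app {I : Type} {H : HilbertSpace} (L1 L2 : list (I * C)) (psi : I -> H) :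
  lsumP (L1 ++ L2) psi = plus (lsumP L1 psi) (lsumP L2 psi).
Proof.
  induction L1 as [|p L1 IH]; simpl.
  - rewrite Hp0l. reflexivity.
  - rewrite IH, Hpa. reflexivity.
Qed.

Lemma lsumP_scal {I : Type} {H : HilbertSpace} (a : C) (L : list (I * C)) (psi : I -> H) :
  lsumP (map (fun p => (fst p, Cmult a (snd p))) L) psi = scal a (lsumP L psi).
Proof.
  induction L as [|p L IH]; simpl.
  - rewrite Hs0. reflexivity.
  - rewrite IH, Hsdl, Hsa. reflexivity.
Qed.

Lemma spanP_subsp {I : Type} {H : HilbertSpace} (P : I -> Prop) (psi : I -> H) :
  subsp H (spanP P psi).
Proof.
  split; [|split].
  - exists nil. split; auto.
  - intros x y [L1 [F1 ->]] [L2 [F2 ->]]. exists (L1 ++ L2). split.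
    + apply Forall_app; auto.
    + symmetry. apply lsumP_app.
  - intros a x [L [FL ->]]. exists (map (fun p => (fst p, Cmult a (snd p))) L). split.
    + apply Forall_map. eapply Forall_impl; [|exact FL]. simpl. auto.
    + symmetry. apply lsumP_scal.
Qed.

Lemma in_span_spanP {I : Type} {H : HilbertSpace} (P : I -> Prop) (psi : I -> H) (v : H) :
  in_span P psi v -> spanP P psi v.
Proof.
  intros [l [c [Fl ->]]]. exists (map (fun i => (i, c i)) l). split.
  - apply Forall_map. exact Fl.
  - induction l as [|i l IH]; simpl; auto.
    f_equal. apply IH. inversion Fl; auto.
Qed.

Lemma lsumH_ext {I : Type} {H : HilbertSpace} (l : list I) (f g : I -> H) :
  (forall j, In j l -> f j = g j) -> lsumH l f = lsumH l g.
Proof.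
  induction l as [|j l IH]; simpl; intros E; auto.
  rewrite E by auto. f_equal. apply IH. auto.
Qed.

Definition upd {I : Type} (c : I -> C) (i : I) (a : C) : I -> C :=
  fun j => if excluded_middle_informative (j = i) then a else c j.

Lemma upd_out {I : Type} {H : HilbertSpace} (psi : I -> H) (l : list I) (c : I -> C) i a :
  ~ In i l -> lsumH l (fun j => scal (upd c i a j) (psi j)) = lsumH l (fun j => scal (c j) (psi j)).
Proof.
  intros Hn. apply lsumH_ext. intros j Hj. unfold upd.
  destruct (excluded_middle_informative (j = i)); auto. subst. contradiction.
Qed.

Lemma upd_in {I : Type} {H : HilbertSpace} (psi : I -> H) (l : list I) (c : I -> C) i a :
  NoDup l -> In i l ->
  lsumH l (fun j => scal (upd c i (Cplus a (c i)) j) (psi j)) =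
  Hplus (Hscal a (psi i)) (lsumH l (fun j => scal (c j) (psi j))).
Proof.
  induction l as [|j l IH]; intros ND Hi; [destruct Hi|].
  inversion ND as [|? ? Hj ND']; subst. simpl.
  destruct (excluded_middle_informative (j = i)) as [->|Hne].
  - unfold upd at 1. destruct (excluded_middle_informative (i = i)) as [_|]; [|congruence].
    rewrite upd_out by auto. rewrite Hsdr, <- Hpa. reflexivity.
  - destruct Hi as [Hi|Hi]; [congruence|].
    unfold upd at 1. destruct (excluded_middle_informative (j = i)) as [|_]; [congruence|].
    fold (upd c i (Cplus a (c i))). rewrite IH by auto.
    rewrite !Hpa, (Hpc _ (scal (c j) (psi j))). reflexivity.
Qed.

Lemma spanP_in_span {I : Type} {H : HilbertSpace} (P : I -> Prop) (psi : I -> H) (L : list (I * C)) :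
  List.Forall (fun p => P (fst p)) L ->
  exists l c, NoDup l /\ List.Forall P l /\ lsumP L psi = lsumH l (fun i => scal (c i) (psi i)).
Proof.
  induction L as [|[i a] L IH]; intros FL.
  - exists nil, (fun _ => RtoC 0). repeat split; auto. constructor.
  - inversion FL as [|? ? Pi FL']; subst. simpl in Pi.
    destruct (IH FL') as [l [c [ND [Fl E]]]].
    simpl. rewrite E.
    destruct (classic (In i l)) as [Hi|Hi].
    + exists l, (upd c i (Cplus a (c i))). repeat split; auto.
      symmetry. apply upd_in; auto.
    + exists (i :: l), (upd c i a). repeat split.
      * constructor; auto.
      * constructor; auto.
      * simpl. rewrite upd_out by auto. unfold upd at 1.
        destruct (excluded_middle_informative (i = i)); [|congruence]. reflexivity.
Qed.

Lemma spanP_iff {I : Type} {H : HilbertSpace} (P : I -> Prop) (psi : I -> H) (v : H) :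
  spanP P psi v -> in_span P psi v.
Proof.
  intros [L [FL ->]]. destruct (spanP_in_span P psi L FL) as [l [c [_ [Fl E]]]].
  exists l, c. auto.
Qed.

Lemma clos_iff {I : Type} {H : HilbertSpace} (P : I -> Prop) (psi : I -> H) (v : H) :
  clos H (spanP P psi) v <-> in_closed_span P psi v.
Proof.
  split; intros Hc eps He; destruct (Hc eps He) as [w [Sw Nw]]; exists w; split; auto.
  - apply spanP_iff; auto.
  - apply in_span_spanP; auto.
Qed.


Lemma lsumR_nonneg {I : Type} (l : list I) (a : I -> R) :
  (forall i, 0 <= a i) -> 0 <= lsumR l a.
Proof. intros Ha. induction l; simpl; [lra|]. pose proof (Ha a0). lra. Qed.

Lemma lsumR_app {I : Type} (l1 l2 : list I) (a : I -> R) :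
  lsumR (l1 ++ l2) a = lsumR l1 a + lsumR l2 a.
Proof. induction l1; simpl; [lra|]. rewrite IHl1. lra. Qed.

Lemma lsumR_ext {I : Type} (l : list I) (a b : I -> R) :
  (forall i, In i l -> a i = b i) -> lsumR l a = lsumR l b.
Proof. induction l; simpl; intros E; auto. rewrite E by auto. f_equal. apply IHl. auto. Qed.

Lemma lsumR_supp {I : Type} (a : I -> R) (l' : list I) :
  (forall i, 0 <= a i) -> NoDup l' -> forall l, NoDup l ->
  (forall y, In y l' -> a y <> 0 -> In y l) -> lsumR l' a <= lsumR l a.
Proof.
  intros Ha. induction l' as [|x l'' IH]; intros ND' l ND Hs.
  - simpl. apply lsumR_nonneg; auto.
  - inversion ND' as [|? ? Hx ND'']; subst. simpl.
    destruct (Req_dec (a x) 0) as [E|E].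
    + rewrite E. rewrite Rplus_0_l. apply IH; auto. intros y Hy Hay. apply Hs; simpl; auto.
    + assert (Hxl : In x l) by (apply Hs; simpl; auto).
      destruct (in_split x l Hxl) as [l1 [l2 ->]].
      rewrite lsumR_app. simpl.
      assert (lsumR l'' a <= lsumR (l1 ++ l2) a).
      { apply IH; auto. eapply NoDup_remove_1; eauto.
        intros y Hy Hay. assert (Hyl : In y (l1 ++ x :: l2)) by (apply Hs; simpl; auto).
        apply in_app_or in Hyl. apply in_or_app. destruct Hyl as [?|[?|?]]; auto.
        subst. contradiction. }
      rewrite lsumR_app in H. lra.
Qed.

Lemma sumI_le {I : Type} (a : I -> R) (B : R) :
  (forall i, 0 <= a i) -> (forall l, NoDup l -> lsumR l a <= B) ->
  is_finite (sumI a) /\ Rbar_le (sumI a) (Finite B).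
Proof.
  intros Ha Hb. unfold sumI.
  destruct (Lub_Rbar_correct (fun s => exists l : list I, NoDup l /\ s = lsumR l a)) as [ub lub].
  assert (Hle : Rbar_le (Lub_Rbar (fun s => exists l : list I, NoDup l /\ s = lsumR l a)) (Finite B)).
  { apply lub. intros x [l [ND ->]]. simpl. apply Hb; auto. }
  assert (Hge : Rbar_le (Finite 0) (Lub_Rbar (fun s => exists l : list I, NoDup l /\ s = lsumR l a))).
  { apply ub. exists nil. split; [constructor|reflexivity]. }
  destruct (Lub_Rbar (fun s => exists l : list I, NoDup l /\ s = lsumR l a)); simpl in *;
    try contradiction.
  split; [reflexivity|exact Hle].
Qed.

Lemma frame_zero {I : Type} {H : HilbertSpace} (psi : I -> H) (g : H) :
  lower_frame_sequence psi -> (forall i, inner H g (psi i) = RtoC 0) -> norm g = 0.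
Proof.
  intros [A [A0 HA]] Hg.
  assert (Hz : forall i, Cmod (inner H g (psi i)) ^ 2 = 0).
  { intro i. rewrite Hg, Cmod_0. ring. }
  destruct (sumI_le (fun i => Cmod (inner H g (psi i)) ^ 2) 0) as [Hf Hl].
  { intro i. rewrite Hz. lra. }
  { intros l _. rewrite (lsumR_ext l _ (fun _ => 0)) by auto. induction l; simpl; lra. }
  specialize (HA g Hf).
  pose proof (Rbar_le_trans _ _ _ HA Hl) as T. simpl in T.
  pose proof (Hng H g). assert (norm g ^ 2 <= 0) by nra. nra.
Qed.

Lemma psi_spanP {I : Type} {H : HilbertSpace} (P : I -> Prop) (psi : I -> H) (i : I) :
  P i -> spanP P psi (psi i).
Proof.
  intros Pi. exists ((i, RtoC 1) :: nil). split.
  - constructor; auto.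
  - simpl. rewrite Hp0r, Hs1. reflexivity.
Qed.

Lemma complete_part {I : Type} {H : HilbertSpace} (psi : I -> H) :
  lower_frame_sequence psi -> complete_seq psi.
Proof.
  intros LF f.
  destruct (proj H (spanP (fun _ => True) psi) f (spanP_subsp _ psi)) as [m [Cm Orth]].
  assert (N0 : norm (minus f m) = 0).
  { apply (frame_zero psi); auto. intro i. apply Orth. apply clos_sub. apply psi_spanP. auto. }
  apply clos_iff. intros eps He. destruct (Cm eps He) as [w [Sw Nw]]. exists w. split; auto.
  pose proof (Hnt H (minus f m) (minus m w)) as T. rewrite <- mA6 in T. lra.
Qed.


Lemma biorth {I : Type} {H : HilbertSpace} (psi : I -> H) (j : I) :
  minimal_seq psi ->
  exists h : H, inner H h (psi j) = RtoC 1 /\ forall i, i <> j -> inner H h (psi i) = RtoC 0.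
Proof.
  intros Min.
  destruct (proj H (spanP (fun i => i <> j) psi) (psi j) (spanP_subsp _ psi)) as [m [Cm Orth]].
  set (g := minus (psi j) m).
  assert (gpos : norm g <> 0).
  { intro N0. apply (Min j). apply clos_iff. intros eps He.
    destruct (Cm eps He) as [w [Sw Nw]]. exists w. split; auto.
    pose proof (Hnt H (minus (psi j) m) (minus m w)) as T. rewrite <- mA6 in T.
    fold g in T. lra. }
  assert (gm : inner H g m = RtoC 0) by (apply Orth; exact Cm).
  assert (gj : inner H g (psi j) = RtoC (norm g ^ 2)).
  { rewrite <- (mA8 H (psi j) m). fold g. rewrite ipD_r, gm, ipN.
    apply C_ext; simpl; ring. }
  pose proof (Hng H g).
  assert (n2 : norm g ^ 2 <> 0).
  { assert (0 < norm g) by lra. apply Rgt_not_eq. apply pow_lt. auto. }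
  exists (scal (RtoC (/ (norm g ^ 2))) g). split.
  - rewrite ipS_l, gj. apply C_ext; simpl; field; auto.
  - intros i Hi. rewrite ipS_l, Orth. apply C_ext; simpl; ring.
    apply clos_sub, psi_spanP. auto.
Qed.

Definition lsumC {I : Type} (l : list I) (F : I -> C) : C :=
  fold_right (fun i s => Cplus (F i) s) (RtoC 0) l.

Lemma ip_lsumH_l {I : Type} {H : HilbertSpace} (l : list I) (v : I -> H) (y : H) :
  inner H (lsumH l v) y = lsumC l (fun j => inner H (v j) y).
Proof. induction l; simpl. apply ip0_l. rewrite ipD_l, IHl. reflexivity. Qed.
Lemma ip_lsumH_r {I : Type} {H : HilbertSpace} (l : list I) (v : I -> H) (y : H) :
  inner H y (lsumH l v) = lsumC l (fun j => inner H y (v j)).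
Proof. induction l; simpl. apply ip0_r. rewrite ipD_r, IHl. reflexivity. Qed.

Lemma lsumC_ext {I : Type} (l : list I) (F G : I -> C) :
  (forall i, In i l -> F i = G i) -> lsumC l F = lsumC l G.
Proof. induction l; simpl; intros E; auto. rewrite E by auto. f_equal. apply IHl. auto. Qed.

Lemma lsumC_zero {I : Type} (l : list I) (F : I -> C) :
  (forall i, In i l -> F i = RtoC 0) -> lsumC l F = RtoC 0.
Proof.
  induction l; simpl; intros E; auto. rewrite E, IHl by auto. apply C_ext; simpl; ring.
Qed.

Lemma lsumC_delta {I : Type} (l : list I) (F : I -> C) (i : I) :
  NoDup l -> In i l -> (forall j, In j l -> j <> i -> F j = RtoC 0) -> lsumC l F = F i.
Proof.
  induction l as [|k l IH]; intros ND Hi E; [destruct Hi|].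
  inversion ND as [|? ? Hk ND']; subst. simpl.
  destruct Hi as [->|Hi].
  - rewrite lsumC_zero; [apply C_ext; simpl; ring|].
    intros j Hj. apply E; [simpl; auto|]. intro; subst; contradiction.
  - rewrite IH; [|auto|auto|intros j Hj Hji; apply E; simpl; auto]. rewrite (E k) by (simpl; auto; intro; subst; contradiction).
    apply C_ext; simpl; ring.
Qed.

Lemma fst_lsumC {I : Type} (l : list I) (F : I -> C) :
  fst (lsumC l F) = lsumR l (fun j => fst (F j)).
Proof. induction l; simpl; auto. rewrite IHl. reflexivity. Qed.

Lemma rf_part {I : Type} {H : HilbertSpace} (psi : I -> H) (hb : I -> H) :
  lower_frame_sequence psi ->
  (forall j, inner H (hb j) (psi j) = RtoC 1) ->
  (forall j i, i <> j -> inner H (hb j) (psi i) = RtoC 0) ->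
  riesz_fischer psi.
Proof.
  intros [A [A0 HA]] B1 B0. exists A. split; auto. intros l c ND.
  set (h := lsumH l (fun i => scal (c i) (psi i))).
  set (f := lsumH l (fun j => scal (c j) (hb j))).
  set (S := lsumR l (fun i => Cmod (c i) ^ 2)).
  assert (cf : forall i, inner H f (psi i) = lsumC l (fun j => Cmult (c j) (inner H (hb j) (psi i)))).
  { intro i. unfold f. rewrite ip_lsumH_l. apply lsumC_ext. intros j _. apply ipS_l. }
  assert (cin : forall i, In i l -> inner H f (psi i) = c i).
  { intros i Hi. rewrite cf, (lsumC_delta _ _ i); auto.
    - rewrite B1. apply C_ext; simpl; ring.
    - intros j _ Hji. rewrite B0 by auto. apply C_ext; simpl; ring. }
  assert (cout : forall i, ~ In i l -> inner H f (psi i) = RtoC 0).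
  { intros i Hi. rewrite cf. apply lsumC_zero. intros j Hj. rewrite B0.
    apply C_ext; simpl; ring. intro; subst; contradiction. }
  destruct (sumI_le (fun i => Cmod (inner H f (psi i)) ^ 2) S) as [Hfin Hle].
  { intro i. pose proof (Cmod_ge_0 (inner H f (psi i))). nra. }
  { intros l' ND'. unfold S.
    rewrite <- (lsumR_ext l (fun i => Cmod (inner H f (psi i)) ^ 2)).
    - apply lsumR_supp; auto.
      + intro i. pose proof (Cmod_ge_0 (inner H f (psi i))). nra.
      + intros y Hy Hay. destruct (classic (In y l)) as [?|Hn]; auto.
        exfalso. apply Hay. rewrite cout, Cmod_0 by auto. ring.
    - intros i Hi. rewrite cin; auto. }
  pose proof (Rbar_le_trans _ _ _ (HA f Hfin) Hle) as Hf. simpl in Hf.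
  assert (fh : inner H f h = lsumC l (fun j => Cmult (c j) (Cconj (c j)))).
  { unfold f. rewrite ip_lsumH_l. apply lsumC_ext. intros j Hj. rewrite ipS_l. f_equal.
    unfold h. rewrite ip_lsumH_r. rewrite (lsumC_delta _ _ j); auto.
    - rewrite ipS_r, B1. apply C_ext; simpl; ring.
    - intros k _ Hkj. rewrite ipS_r, B0 by auto. apply C_ext; simpl; ring. }
  assert (hf : fst (inner H h f) = S).
  { rewrite ipC, fh. transitivity (fst (lsumC l (fun j => Cmult (c j) (Cconj (c j))))).
    reflexivity. rewrite fst_lsumC. apply lsumR_ext. intros j _. rewrite Cmod2_alt.
    destruct (c j); simpl; ring. }
  pose proof (nsq_minus_scal H h f (RtoC A)) as K.
  destruct (inner H h f) as [p q]. simpl in hf. subst p. simpl in K.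
  pose proof (Hng H (minus h (scal (RtoC A) f))).
  pose proof (Hng H f).
  assert (0 <= norm (minus h (scal (RtoC A) f)) ^ 2) by nra.
  assert (A * (A * norm f ^ 2) <= A * S) by (apply Rmult_le_compat_l; lra).
  fold h. nra.
Qed.

Theorem corollary6p19 (H : HilbertSpace) (I : Type) (psi : I -> H) :
  separable H -> countable_type I ->
  lower_frame_sequence psi -> minimal_seq psi ->
  complete_seq psi /\ riesz_fischer psi.
Proof.
  intros _ _ LF Min. split.
  - apply complete_part; auto.
  - assert (Hb : forall j, exists h : H, inner H h (psi j) = RtoC 1 /\
                   forall i, i <> j -> inner H h (psi i) = RtoC 0)
      by (intro j; apply biorth; auto).
    apply (rf_part psi (fun j => proj1_sig (constructive_indefinite_description _ (Hb j))) LF).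
    + intro j. exact (proj1 (proj2_sig (constructive_indefinite_description _ (Hb j)))).
    + intros j i Hij. exact (proj2 (proj2_sig (constructive_indefinite_description _ (Hb j))) i Hij).
Qed.
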